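(* Let $f:\mathbb{R}^p\times\mathbb{R}^n\to\mathbb{R}^n$, written $f(a,x)$ with parameters $a\in\mathbb{R}^p$ and variables $x\in\mathbb{R}^n$, be such that for every $a$ the map $f(a,\cdot)$ is differentiable (on an open set containing the box $[x]$ below), with Jacobian $\frac{\partial f}{\partial x}(a,x)$ with respect to $x$. Let $[x],[y],[z]\in\mathbb{IR}^n$, $[a]\in\mathbb{IR}^p$, $\tilde x\in[x]$ and $[X]\in\mathbb{IR}^{n\times n}$ satisfy: (i) $[x]\subseteq[z]$; (ii) $\{f(a,\tilde x): a\in[a]\}\subseteq[y]$; (iii) $\{\frac{\partial f}{\partial x}(a,x): a\in[a],\ x\in[x]\}\subseteq[X]$ (entrywise inclusion). Define the (parametric) Hansen–Sengupta image $$[x'] := \tilde x+\Gamma\bigl([X],\,-[y],\,[x]-\tilde x,\,[z]-\tilde x\bigr).$$ Then: (1) for every $a\in[a]$ and every $x\in[x]$ with $f(a,x)=0$, one has $x\in[x']$; (2) if $[x']\neq\emptyset$ and $[x']\subseteq\operatorname{int}[x]$, then for every $a\in[a]$ the map $f(a,\cdot)$ has a unique zero in $[x']$.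
   Context: $\mathbb{IR}^n$ denotes the set of closed interval vectors (boxes) of dimension $n$ and $\mathbb{IR}^{n\times n}$ the set of $n\times n$ interval matrices; sums and products of intervals are those of (extended) interval arithmetic, and subtracting a real vector from an interval vector is done componentwise. For a set $S\subseteq\mathbb{R}$, $\Box S$ denotes its interval hull (smallest closed interval containing $S$, possibly unbounded; $\Box\emptyset=\emptyset$). One-dimensional Gauss–Seidel: for intervals $[\alpha],[\beta],[\xi]$, $$\gamma([\alpha],[\beta],[\xi]):=\Box\{x\in[\xi]:\ \exists \alpha\in[\alpha],\ \exists\beta\in[\beta],\ \alpha x=\beta\}$$ (when $0\notin[\alpha]$ this equals $([\beta]/[\alpha])\cap[\xi]$). Multidimensional interval Gauss–Seidel: for $[A]\in\mathbb{IR}^{n\times n}$ with entries $[A_{ij}]$, and $[b],[u],[w]\in\mathbb{IR}^n$, $\Gamma([A],[b],[u],[w]):=[u']$ where the components are computed successively for $i=1,\dots,n$ by $$[u'_i]:=\gamma\Bigl([A_{ii}],\ [b_i]-\sum_{j<i}[A_{ij}][u'_j]-\sum_{j>i}[A_{ij}][u_j],\ [w_i]\Bigr).$$ If some component is empty, $[u']$ is the empty set. *)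

(* Defs.v *)
From mathcomp Require Import all_boot.
From Stdlib Require Import Reals.
Set Implicit Arguments. Unset Strict Implicit. Unset Printing Implicit Defensive.
Open Scope R_scope.

Definition vec (n : nat) := 'I_n -> R.

Definition rsum {I : Type} (l : seq I) (F : I -> R) : R :=
  foldr (fun j acc => F j + acc) 0 l.
Definition vnorm {n : nat} (h : vec n) : R :=
  foldr (fun j acc => Rmax (Rabs (h j)) acc) 0 (enum 'I_n).

Definition vadd {n : nat} (x y : vec n) : vec n := fun i => x i + y i.
Definition vsub {n : nat} (x y : vec n) : vec n := fun i => x i - y i.

Definition is_open {n : nat} (U : vec n -> Prop) : Prop :=
  forall x, U x -> exists r, 0 < r /\ forall y, vnorm (vsub y x) < r -> U y.

Definition has_jacobian {n : nat} (g : vec n -> vec n)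
    (Jx : 'I_n -> 'I_n -> R) (x : vec n) : Prop :=
  forall eps, 0 < eps -> exists delta, 0 < delta /\
    forall h : vec n, vnorm h < delta ->
      forall i, Rabs (g (vadd x h) i - g x i - rsum (enum 'I_n) (fun j => Jx i j * h j))
                <= eps * vnorm h.

(** Closed bounded intervals [lo, hi] (elements of IR), given by their
    endpoints; well-formedness lo <= hi is a separate predicate. *)
Definition interval := (R * R)%type.
Definition ival (I : interval) : R -> Prop := fun x => fst I <= x <= snd I.
Definition iwf (I : interval) : Prop := fst I <= snd I.

Definition in_box {n : nat} (B : 'I_n -> interval) (x : vec n) : Prop :=
  forall i, ival (B i) (x i).
Definition in_int_box {n : nat} (B : 'I_n -> interval) (x : vec n) : Prop :=
  forall i, fst (B i) < x i < snd (B i).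

(** Interval arithmetic, given set-theoretically (all intervals occurring are
    closed and bounded, where this coincides with interval arithmetic). *)
Definition iset := R -> Prop.
Definition sadd (A B : iset) : iset := fun z => exists x y, A x /\ B y /\ z = x + y.
Definition ssub (A B : iset) : iset := fun z => exists x y, A x /\ B y /\ z = x - y.
Definition smul (A B : iset) : iset := fun z => exists x y, A x /\ B y /\ z = x * y.
Definition sopp (A : iset) : iset := fun z => exists x, A x /\ z = - x.
Definition sshift (A : iset) (c : R) : iset := fun z => exists x, A x /\ z = x - c.
Definition ssum {I : Type} (l : seq I) (F : I -> iset) : iset :=
  foldr (fun j acc => sadd (F j) acc) (fun z => z = 0) l.

(** Interval hull: the smallest closed (possibly unbounded) interval
    containing S; empty for S empty. *)
Definition hull (S : iset) : iset := fun x =>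
  (exists s, S s) /\
  (forall u, (forall s, S s -> s <= u) -> x <= u) /\
  (forall l, (forall s, S s -> l <= s) -> l <= x).

Definition gam (Al Be Xi : iset) : iset :=
  hull (fun x => Xi x /\ exists al be, Al al /\ Be be /\ al * x = be).

(** Multidimensional interval Gauss-Seidel: step k computes component k
    (the others being kept from the previous step). *)
Fixpoint gs_aux {n : nat} (A : 'I_n -> 'I_n -> iset) (b u w : 'I_n -> iset)
    (k : nat) : 'I_n -> iset :=
  match k with
  | O => u
  | S k' =>
      let prev := gs_aux A b u w k' in
      fun i =>
        if Nat.eqb (nat_of_ord i) k' then
          gam (A i i)
              (ssub (ssub (b i)
                   (ssum [seq j <- enum 'I_n | Nat.ltb (nat_of_ord j) (nat_of_ord i)] (fun j => smul (A i j) (prev j))))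
                   (ssum [seq j <- enum 'I_n | Nat.ltb (nat_of_ord i) (nat_of_ord j)] (fun j => smul (A i j) (u j))))
              (w i)
        else prev i
  end.

Definition Gamma {n : nat} (A : 'I_n -> 'I_n -> iset) (b u w : 'I_n -> iset)
  : 'I_n -> iset := gs_aux A b u w n.

(** The parametric Hansen-Sengupta image
    [x'] = xt + Gamma([X], -[y], [x] - xt, [z] - xt), as a predicate on R^n
    (it is empty as soon as one component is empty). *)
Definition HS_image {n : nat} (X : 'I_n -> 'I_n -> interval)
    (y x z : 'I_n -> interval) (xt : vec n) : vec n -> Prop :=
  fun v => forall i,
    exists g, Gamma (fun i j => ival (X i j))
                    (fun i => sopp (ival (y i)))
                    (fun i => sshift (ival (x i)) (xt i))
                    (fun i => sshift (ival (z i)) (xt i)) i g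
              /\ v i = xt i + g.

(* Main.v *)
Require Import Defs.
From mathcomp Require Import all_boot.
From Stdlib Require Import Reals Lra Psatz FunctionalExtensionality IndefiniteDescription.
Open Scope R_scope.

Lemma rsum_nil {I} (F : I -> R) : rsum [::] F = 0. Proof. reflexivity. Qed.
Lemma rsum_cons {I} (j : I) l (F : I -> R) : rsum (j :: l) F = F j + rsum l F.
Proof. reflexivity. Qed.

Lemma rsum_ext {I : eqType} (l : seq I) (F G : I -> R) :
  (forall j, j \in l -> F j = G j) -> rsum l F = rsum l G.
Proof.
elim: l => [|j l IH] H //. rewrite !rsum_cons H ?mem_head // IH // => k Hk.
apply H; by rewrite in_cons Hk orbT.
Qed.

Lemma rsum_plus {I} (l : seq I) F G : rsum l (fun j => F j + G j) = rsum l F + rsum l G.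
Proof. elim: l => [|j l IH]; rewrite ?rsum_cons ?IH /rsum /=; lra. Qed.

Lemma rsum_scal {I} (l : seq I) c F : rsum l (fun j => c * F j) = c * rsum l F.
Proof. elim: l => [|j l IH]; rewrite ?rsum_cons ?IH /rsum /=; lra. Qed.

Lemma rsum_minus {I} (l : seq I) F G : rsum l (fun j => F j - G j) = rsum l F - rsum l G.
Proof. elim: l => [|j l IH]; rewrite ?rsum_cons ?IH /rsum /=; lra. Qed.

Lemma rsum_le {I : eqType} (l : seq I) (F G : I -> R) :
  (forall j, j \in l -> F j <= G j) -> rsum l F <= rsum l G.
Proof.
elim: l => [|j l IH] H; rewrite ?rsum_cons. rewrite /rsum /=; lra.
have h1 := H j (mem_head _ _).
have h2 : rsum l F <= rsum l G. apply IH => k Hk; apply H; by rewrite in_cons Hk orbT.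
lra.
Qed.

Lemma rsum_abs {I} (l : seq I) F : Rabs (rsum l F) <= rsum l (fun j => Rabs (F j)).
Proof.
elim: l => [|j l IH]; rewrite ?rsum_cons. rewrite /rsum /= Rabs_R0; lra.
have := Rabs_triang (F j) (rsum l F). lra.
Qed.

Lemma rsum_nonneg {I : eqType} (l : seq I) F : (forall j, j \in l -> 0 <= F j) -> 0 <= rsum l F.
Proof. move=> H. have := rsum_le l (fun _ => 0) F H. have -> : rsum l (fun _ => 0) = 0.
elim: l {H} => [|j l IH] //; rewrite rsum_cons IH; lra. done. Qed.

Definition ltl {n} (i : 'I_n) := [seq j <- enum 'I_n | Nat.ltb (nat_of_ord j) (nat_of_ord i)].
Definition gtl {n} (i : 'I_n) := [seq j <- enum 'I_n | Nat.ltb (nat_of_ord i) (nat_of_ord j)].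

Lemma rsum_split3 {n} (i : 'I_n) (l : seq 'I_n) F :
  rsum l F = rsum [seq j <- l | Nat.ltb (nat_of_ord j) (nat_of_ord i)] F + rsum [seq j <- l | j == i] F
            + rsum [seq j <- l | Nat.ltb (nat_of_ord i) (nat_of_ord j)] F.
Proof.
elim: l => [|j l IH]. rewrite /rsum /=; lra.
rewrite rsum_cons {1}IH /=.
case: (Nat.ltb_spec j i) => H1.
- have -> : (j == i) = false. apply/eqP => E; subst; lia.
  have -> : Nat.ltb i j = false. apply Nat.ltb_ge; lia.
  rewrite rsum_cons; lra.
- case: (Nat.ltb_spec i j) => H2.
  + have -> : (j == i) = false. apply/eqP => E; subst; lia.
    rewrite rsum_cons; lra.
  + have -> : (j == i) = true. apply/eqP; apply: val_inj => /=; lia.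
    rewrite rsum_cons; lra.
Qed.

Lemma rsum_split {n} (i : 'I_n) F :
  rsum (enum 'I_n) F = rsum (ltl i) F + F i + rsum (gtl i) F.
Proof.
rewrite {1}(rsum_split3 i (enum 'I_n) F) /ltl /gtl.
have E : [seq j <- enum 'I_n | j == i] = [:: i].
  have := @filter_pred1_uniq _ (enum 'I_n) i (enum_uniq _) (mem_enum _ i).
  by [].
rewrite E rsum_cons rsum_nil; lra.
Qed.

Lemma mem_ltl {n} {i j : 'I_n} : j \in ltl i -> (j < i)%nat.
Proof. rewrite mem_filter => /andP [/Nat.ltb_lt H _]. apply/ltP. lia. Qed.
Lemma mem_gtl {n} {i j : 'I_n} : j \in gtl i -> (i < j)%nat.
Proof. rewrite mem_filter => /andP [/Nat.ltb_lt H _]. apply/ltP. lia. Qed.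

Lemma ssum_in {I : eqType} (l : seq I) (F : I -> iset) (g : I -> R) :
  (forall j, j \in l -> F j (g j)) -> ssum l F (rsum l g).
Proof.
elim: l => [|j l IH] H /=. reflexivity.
exists (g j), (rsum l g); split; [apply H, mem_head|split; [|reflexivity]].
apply IH => k Hk; apply H; by rewrite in_cons Hk orbT.
Qed.

Lemma ssum_ext {I : eqType} (l : seq I) (F G : I -> iset) :
  (forall j, j \in l -> F j = G j) -> ssum l F = ssum l G.
Proof.
elim: l => [|j l IH] H //=. rewrite H ?mem_head // IH // => k Hk.
apply H; by rewrite in_cons Hk orbT.
Qed.

Definition conv (S : iset) := forall u v z, S u -> S v -> u <= z <= v -> S z.

Lemma conv_either S u v z : conv S -> S u -> S v -> (u <= z <= v \/ v <= z <= u) -> S z.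
Proof. move=> C Hu Hv [H|H]; [exact: (C u v)|exact: (C v u)]. Qed.
Arguments conv_either {S u v z}.

Lemma divmul a b : b <> 0 -> (a / b) * b = a.
Proof. move=> H; field; exact H. Qed.
Arguments divmul a {b}.

Lemma conv_ival I : conv (ival I).
Proof. move=> u v z; rewrite /ival; lra. Qed.

Lemma conv_sopp A : conv A -> conv (sopp A).
Proof.
move=> C u v z [x [Hx ->]] [y [Hy ->]] H. exists (- z); split; [|lra].
apply: (C y x) => //; lra.
Qed.

Lemma conv_sshift A c : conv A -> conv (sshift A c).
Proof.
move=> C u v z [x [Hx ->]] [y [Hy ->]] H. exists (z + c); split; [|lra].
apply: (C x y) => //; lra.
Qed.

Lemma conv_sadd A B : conv A -> conv B -> conv (sadd A B).
Proof.
move=> CA CB u v z [x1 [y1 [H1 [H2 ->]]]] [x2 [y2 [H3 [H4 ->]]]] H.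
case: (Rle_dec z (x2 + y1)) => Hz.
- exists (z - y1), y1; split; [|split; [done|lra]]. apply: (CA x1 x2) => //; lra.
- exists x2, (z - x2); split; [done|split; [|lra]]. apply: (CB y1 y2) => //; lra.
Qed.

Lemma conv_ssub A B : conv A -> conv B -> conv (ssub A B).
Proof.
move=> CA CB u v z [x1 [y1 [H1 [H2 ->]]]] [x2 [y2 [H3 [H4 ->]]]] H.
case: (Rle_dec z (x2 - y1)) => Hz.
- exists (z + y1), y1; split; [|split; [done|lra]]. apply: (CA x1 x2) => //; lra.
- exists x2, (x2 - z); split; [done|split; [|lra]]. apply: (CB y2 y1) => //; lra.
Qed.

Lemma conv_smul A B : conv A -> conv B -> conv (smul A B).
Proof.
move=> CA CB u v z [a1 [g1 [H1 [H2 ->]]]] [a2 [g2 [H3 [H4 ->]]]] H.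
case: (Rle_dec z (a2 * g1)) => Hz.
- case: (Req_dec g1 0) => Hg.
  + exists a1, g1; split; [done|split; [done|]]. subst g1; nra.
  + exists (z / g1), g1; split; [|split; [done|by rewrite divmul]].
    have E := divmul z Hg. set a := z / g1 in E *.
    apply: (conv_either CA H1 H3).
    case: (Rlt_le_dec 0 g1) => Hp; [left|right]; split; nra.
- case: (Req_dec a2 0) => Ha.
  + exists a2, g2; split; [done|split; [done|]]. subst a2; nra.
  + exists a2, (z / a2); split; [done|split; [|rewrite Rmult_comm divmul //]].
    have E := divmul z Ha. set g := z / a2 in E *.
    apply: (conv_either CB H2 H4).
    case: (Rlt_le_dec 0 a2) => Hp; [left|right]; split; nra.
Qed.

Lemma conv_ssum {I} (l : seq I) F : (forall j, conv (F j)) -> conv (ssum l F).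
Proof.
move=> C; elim: l => [|j l IH] /=.
- move=> u v z -> ->; lra.
- apply conv_sadd => //.
Qed.

Lemma conv_hull S : conv (hull S).
Proof.
move=> u v z [Hn [Hu1 Hu2]] [_ [Hv1 Hv2]] H; split; [done|split].
- move=> w Hw. have := Hv1 w Hw. lra.
- move=> w Hw. have := Hu2 w Hw. lra.
Qed.

Lemma hull_in (S : iset) x : S x -> hull S x.
Proof. move=> H; split; [by exists x|split]; auto. Qed.

Definition Q (A B : iset) : iset := fun t => exists al be, A al /\ B be /\ al * t = be.

Lemma conv_Q A B : conv A -> conv B -> (forall a1 a2, A a1 -> A a2 -> 0 < a1 * a2) ->
  conv (Q A B).
Proof.
intros CA CB Sg u v z Hu Hv H.
destruct Hu as [a1 [b1 [H1 [H2 Eq1]]]]. destruct Hv as [a2 [b2 [H3 [H4 Eq2]]]].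
have P12 := Sg _ _ H1 H3. have P11 := Sg _ _ H1 H1. have P22 := Sg _ _ H3 H3.
have Ha2 : a2 <> 0 by nra.
have Et := divmul b1 Ha2. set t := b1 / a2 in Et.
case: (Rle_dec z t) => Hz.
- case: (Req_dec b1 0) => Hb.
  + have Ha1 : a1 <> 0 by nra.
    have u0 : u = 0. rewrite Hb in Eq1. case: (Rmult_integral _ _ Eq1) => //.
    have t0 : t = 0. rewrite Hb in Et. case: (Rmult_integral _ _ Et) => //.
    exists a1, b1; split; [done|split; [done|]]. nra.
  + have zn : z <> 0 by nra.
    have Ez := divmul b1 zn. set a := b1 / z in Ez.
    exists a, b1; split; [|split; [done|lra]].
    apply: (conv_either CA H1 H3).
    have k1 : (a - a1) * z = a1 * (u - z) by nra.
    have k2 : (a - a2) * z = a2 * (t - z) by nra.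
    case: (Rlt_le_dec 0 a1) => Hp; case: (Rlt_le_dec 0 z) => Hq;
    first [left; split; nra | right; split; nra].
- exists a2, (a2 * z); split; [done|split; [|done]].
  apply: (conv_either CB H2 H4).
  case: (Rlt_le_dec 0 a2) => Hp; [left|right]; split; nra.
Qed.

Lemma gam_in A B W x al be : W x -> A al -> B be -> al * x = be -> gam A B W x.
Proof. move=> Hw Ha Hb E. apply hull_in. split; [done|by exists al, be]. Qed.
Arguments gam_in {A B W x} al be.

Lemma C1sign (I : interval) B W L H :
  iwf I -> (forall t, L <= t <= H -> W t) ->
  (exists g, gam (ival I) B W g) -> (forall g, gam (ival I) B W g -> L < g < H) ->
  0 < fst I \/ snd I < 0.
Proof.
move=> wf HW [g0 Hg0] Hin.
case: (Rlt_le_dec 0 (fst I)) => Hp; [by left|].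
case: (Rlt_le_dec (snd I) 0) => Hq; [by right|].
exfalso.
have [s0 [Ws0 [al [be [Ha [Hb E]]]]]] : exists s, W s /\ exists al be, ival I al /\ B be /\ al * s = be.
  by case: Hg0 => [[s Hs] _]; exists s.
have Hs0 : L < s0 < H. apply Hin; apply hull_in; split; [done|by exists al, be].
case: (Req_dec be 0) => Hbe.
- have := Hin H (gam_in 0 be _ _ Hb _). rewrite /ival; move=> h.
  have : L < H < H. apply h; [apply HW; lra|split; lra|lra]. lra.
- case: (Rlt_le_dec 0 s0) => Hs.
  + have Hne : H <> 0 by lra.
    have Ed := divmul (al * s0) Hne.
    set a := al * s0 / H in Ed.
    have : L < H < H. apply Hin. apply (gam_in a be); [apply HW; lra| |done|lra].
      rewrite /ival in Ha *.
      have k : a * H = al * s0 by [].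
      split; nra.
    lra.
  + have s0n : s0 < 0. case: (Req_dec s0 0) => h; [subst; nra|lra].
    have Hne : L <> 0 by lra.
    have Ed := divmul (al * s0) Hne.
    set a := al * s0 / L in Ed.
    have : L < L < H. apply Hin. apply (gam_in a be); [apply HW; lra| |done|lra].
      rewrite /ival in Ha *.
      split; nra.
    lra.
Qed.

Lemma C2q (A B W : iset) L H :
  conv A -> conv B -> (forall a1 a2, A a1 -> A a2 -> 0 < a1 * a2) ->
  (forall t, L <= t <= H -> W t) ->
  (exists g, gam A B W g) -> (forall g, gam A B W g -> L < g < H) ->
  forall t, Q A B t -> L < t < H.
Proof.
move=> CA CB Sg HW [g0 Hg0] Hin t Ht.
have [s0 [Ws0 Qs0]] : exists s, W s /\ Q A B s.
  by case: Hg0 => [[s Hs] _]; exists s.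
have Hs0 : L < s0 < H. apply Hin; apply hull_in; by split.
have CQ := @conv_Q A B CA CB Sg.
split.
- case: (Rlt_le_dec L t) => // h.
  have QL : Q A B L by apply: (CQ t s0) => //; lra.
  have : L < L < H. apply Hin; apply hull_in; split => //; apply HW; lra.
  lra.
- case: (Rlt_le_dec t H) => // h.
  have QH : Q A B H by apply: (CQ s0 t) => //; lra.
  have : L < H < H. apply Hin; apply hull_in; split => //; apply HW; lra.
  lra.
Qed.

Lemma vnorm_nonneg {n} (e : vec n) : 0 <= vnorm e.
Proof.
rewrite /vnorm; elim: (enum 'I_n) => [|j l IH] /=; [lra|].
have := Rmax_r (Rabs (e j)) (foldr (fun j0 acc => Rmax (Rabs (e j0)) acc) 0 l). lra.
Qed.

Lemma vnorm_scale {n} (h : R) (e : vec n) : vnorm (fun j => h * e j) = Rabs h * vnorm e.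
Proof.
rewrite /vnorm; elim: (enum 'I_n) => [|j l IH] /=; [lra|].
rewrite IH Rabs_mult RmaxRmult //. apply Rabs_pos.
Qed.

Lemma deriv_line n (g : vec n -> vec n) (Jx : 'I_n -> 'I_n -> R) (x e : vec n) t i :
  has_jacobian g Jx (fun j => x j + t * e j) ->
  derivable_pt_lim (fun s => g (fun j => x j + s * e j) i) t
     (rsum (enum 'I_n) (fun j => Jx i j * e j)).
Proof.
move=> HJ eps Heps.
set N := vnorm e.
have HN : 0 <= N := vnorm_nonneg e.
have Heps' : 0 < eps / (2 * (N + 1)). apply Rdiv_lt_0_compat; lra.
case: (HJ _ Heps') => d0 [Hd0 Hd].
have Hdp : 0 < d0 / (N + 1) by apply Rdiv_lt_0_compat; lra.
exists (mkposreal _ Hdp) => h hn /= hd.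
have Ep : (fun j => x j + (t + h) * e j) = vadd (fun j => x j + t * e j) (fun j => h * e j).
  apply functional_extensionality => j; rewrite /vadd; ring.
rewrite Ep.
have Hnh : vnorm (fun j => h * e j) < d0.
  rewrite vnorm_scale -/N.
  have Hah : 0 < Rabs h by apply Rabs_pos_lt.
  have : Rabs h * (N + 1) < d0.
    have := Rmult_lt_compat_r (N + 1) _ _ ltac:(lra) hd. 
    have -> : d0 / (N + 1) * (N + 1) = d0 by field; lra. done.
  have : Rabs h * (N + 1) = Rabs h * N + Rabs h by ring. lra.
have B := Hd _ Hnh i.
rewrite vnorm_scale -/N in B.
have Es : rsum (enum 'I_n) (fun j => Jx i j * (h * e j)) = h * rsum (enum 'I_n) (fun j => Jx i j * e j).
  rewrite -rsum_scal; apply rsum_ext => j _; ring.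
rewrite Es in B.
set D := g _ i - g _ i in B *.
set l := rsum _ _ in B Es *.
have E2 : D / h - l = (D - h * l) / h by field.
rewrite E2 /Rdiv Rabs_mult Rabs_inv -/(Rdiv _ _).
have Hah : 0 < Rabs h by apply Rabs_pos_lt.
apply (Rmult_lt_reg_r (Rabs h)) => //.
have -> : Rabs (D - h * l) / Rabs h * Rabs h = Rabs (D - h * l) by field; lra.
have : eps / (2 * (N + 1)) * (Rabs h * N) < eps * Rabs h.
  have -> : eps / (2 * (N + 1)) * (Rabs h * N) = eps * Rabs h * (N / (2 * (N + 1))) by field; lra.
  have : N / (2 * (N + 1)) < 1.
    apply (Rmult_lt_reg_r (2 * (N + 1))); [lra|]. 
    have -> : N / (2 * (N + 1)) * (2 * (N + 1)) = N by field; lra. lra.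
  have : 0 < eps * Rabs h by nra.
  have : 0 <= N / (2 * (N + 1)) by apply Rmult_le_pos; [lra|apply Rlt_le, Rinv_0_lt_compat; lra].
  nra.

lra.
Qed.

Lemma mvt_vec n (g : vec n -> vec n) (Jg : vec n -> 'I_n -> 'I_n -> R) (P : vec n -> Prop) :
  (forall x, P x -> has_jacobian g (Jg x) x) ->
  forall x y, (forall t, 0 <= t <= 1 -> P (fun j => x j + t * (y j - x j))) ->
  forall i, exists c, 0 < c < 1 /\ g y i - g x i =
     rsum (enum 'I_n) (fun j => Jg (fun k => x k + c * (y k - x k)) i j * (y j - x j)).
Proof.
move=> HJ x y Hseg i.
set e := fun j => y j - x j.
have := MVT_cor2 (fun s => g (fun j => x j + s * e j) i)
   (fun s => rsum (enum 'I_n) (fun j => Jg (fun k => x k + s * e k) i j * e j)) 0 1 Rlt_0_1.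
case.
- move=> c Hc; apply deriv_line, HJ, Hseg, Hc.
- move=> c [Ec Hc]; exists c; split => //.
  have E1 : (fun j => x j + 1 * e j) = y by apply functional_extensionality => j; rewrite /e; ring.
  have E0 : (fun j => x j + 0 * e j) = x by apply functional_extensionality => j; rewrite /e; ring.
  rewrite E1 E0 in Ec. rewrite Ec /e; ring.
Qed.


Lemma gs_low {n} (A : 'I_n -> 'I_n -> iset) b u w k (i : 'I_n) :
  (k <= i)%nat -> gs_aux A b u w k i = u i.
Proof.
elim: k => [|k IH] /leP H //=.
have -> : Nat.eqb i k = false by apply Nat.eqb_neq; lia.
apply IH; apply/leP; lia.
Qed.

Lemma gs_high {n} (A : 'I_n -> 'I_n -> iset) b u w k (i : 'I_n) :
  (i < k)%nat -> gs_aux A b u w k i = gs_aux A b u w (S i) i.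
Proof.
elim: k => [|k IH] /ltP H; [lia|].
case: (Nat.eq_dec i k) => E.
- by rewrite -E.
- rewrite /=. have -> : Nat.eqb i k = false by apply Nat.eqb_neq.
  rewrite IH //; apply/ltP; lia.
Qed.

Lemma gs_step {n} (A : 'I_n -> 'I_n -> iset) b u w (i : 'I_n) :
  gs_aux A b u w (S i) i =
  gam (A i i) (ssub (ssub (b i) (ssum (ltl i) (fun j => smul (A i j) (gs_aux A b u w i j))))
                    (ssum (gtl i) (fun j => smul (A i j) (u j)))) (w i).
Proof. by rewrite /= Nat.eqb_refl. Qed.

Lemma GammaE {n} (A : 'I_n -> 'I_n -> iset) b u w (i : 'I_n) :
  Gamma A b u w i =
  gam (A i i) (ssub (ssub (b i) (ssum (ltl i) (fun j => smul (A i j) (Gamma A b u w j))))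
                    (ssum (gtl i) (fun j => smul (A i j) (u j)))) (w i).
Proof.
rewrite /Gamma (@gs_high _ _ _ _ _ n i (ltn_ord i)) gs_step.
f_equal. f_equal. f_equal. apply ssum_ext => j Hj.
have Hj' := mem_ltl Hj. move/ltP: Hj' => Hj'.
rewrite (@gs_high _ _ _ _ _ i) ?(@gs_high _ _ _ _ _ n) //; apply/ltP => //.
Qed.

Lemma gs_contains {n} (A : 'I_n -> 'I_n -> iset) b u w (d : vec n)
  (a : 'I_n -> 'I_n -> R) (bb : vec n) :
  (forall i, u i (d i)) -> (forall i, w i (d i)) -> (forall i j, A i j (a i j)) ->
  (forall i, b i (bb i)) ->
  (forall i, a i i * d i = bb i - rsum (ltl i) (fun j => a i j * d j)
                                - rsum (gtl i) (fun j => a i j * d j)) ->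
  forall k i, gs_aux A b u w k i (d i).
Proof.
move=> Hu Hw Ha Hb Hrow; elim => [|k IH] i //=.
case: (Nat.eqb_spec i k) => E //.
apply (gam_in (a i i) (bb i - rsum (ltl i) (fun j => a i j * d j)
                                - rsum (gtl i) (fun j => a i j * d j))) => //.
- exists (bb i - rsum (ltl i) (fun j => a i j * d j)), (rsum (gtl i) (fun j => a i j * d j)).
  split; [|split; [|done]].
  + exists (bb i), (rsum (ltl i) (fun j => a i j * d j)); split; [done|split; [|done]].
    apply ssum_in => j _. by exists (a i j), (d j).
  + apply ssum_in => j _. by exists (a i j), (d j).
Qed.

Lemma FM {n} (c d : 'I_n -> R) : (forall i, 0 <= c i) -> (forall i, 0 < d i) ->
  exists δ, 0 < δ <= 1 /\ forall i, δ * c i < d i.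
Proof.
move=> Hc Hd.
suff: forall l : seq 'I_n, exists δ, 0 < δ <= 1 /\ forall i, i \in l -> δ * c i < d i.
  case/(_ (enum 'I_n)) => δ [H1 H2]; exists δ; split => // i; apply H2; by rewrite mem_enum.
elim => [|j l [δ [H1 H2]]]; first by exists 1; split; [lra|].
have Hq : 0 < d j / (c j + 1) by apply Rdiv_lt_0_compat; [apply Hd|have := Hc j; lra].
have Hm1 := Rmin_l δ (d j / (c j + 1)). have Hm2 := Rmin_r δ (d j / (c j + 1)).
have Hpos : 0 < Rmin δ (d j / (c j + 1)) by rewrite /Rmin; case: Rle_dec; lra.
remember (Rmin δ (d j / (c j + 1))) as δ' eqn:Ed'.
exists δ'; split; [lra|] => i; rewrite in_cons => /orP [/eqP ->|Hi].
- have Hcj := Hc j. have Hdj := Hd j.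
  have E : d j / (c j + 1) * (c j + 1) = d j by field; lra.
  have : δ' * c j <= d j / (c j + 1) * c j by apply Rmult_le_compat_r.
  nra.
- have := H2 i Hi. have := Hc i. nra.
Qed.

Lemma FM2 {n} (c : 'I_n -> R) : exists R, 0 <= R /\ forall i, c i <= R.
Proof.
suff: forall l : seq 'I_n, exists R, 0 <= R /\ forall i, i \in l -> c i <= R.
  case/(_ (enum 'I_n)) => R [H1 H2]; exists R; split => // i; apply H2; by rewrite mem_enum.
elim => [|j l [R [H1 H2]]]; first by exists 0; split; [lra|].
exists (Rmax R (c j)); split; [have := Rmax_l R (c j); lra|] => i.
rewrite in_cons => /orP [/eqP ->|Hi]; first by apply Rmax_r.
have := H2 i Hi. have := Rmax_l R (c j). lra.
Qed.

Lemma pow_decr δ a b : 0 < δ <= 1 -> (a <= b)%coq_nat -> δ ^ b <= δ ^ a.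
Proof.
move=> Hd Hab. have E : b = (a + Nat.sub b a)%coq_nat by lia. rewrite {1}E.
rewrite pow_add.
have H1 : 0 <= δ ^ a by apply pow_le; lra.
have H2 : δ ^ (Nat.sub b a) <= 1. have := pow_incr δ 1 (Nat.sub b a) ltac:(lra). by rewrite pow1.
nra.
Qed.

Lemma lim0 q C z : 0 <= q < 1 -> 0 <= z -> (forall k, z <= C * q ^ k) -> z = 0.
Proof.
move=> Hq Hz H.
case: (Req_dec z 0) => // Hn. exfalso.
have Hz' : 0 < z by lra.
have HC : 0 < C. have := H O. rewrite pow_O. lra.
have Ha : Rabs q < 1 by rewrite Rabs_pos_eq; lra.
case: (pow_lt_1_zero q Ha (z / C) (Rdiv_lt_0_compat _ _ Hz' HC)) => N HN.
have := HN N (le_n _). rewrite Rabs_pos_eq; last by apply pow_le; lra.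
move=> h. have := H N.
have : C * q ^ N < C * (z / C) by apply Rmult_lt_compat_l.
have -> : C * (z / C) = z by field; lra.
lra.
Qed.

Definition clip lo hi y := Rmax lo (Rmin hi y).

Lemma clip_in lo hi y : lo <= hi -> lo <= clip lo hi y <= hi.
Proof. rewrite /clip /Rmax /Rmin; repeat case: Rle_dec; lra. Qed.
Lemma clip_lip lo hi y z : Rabs (clip lo hi y - clip lo hi z) <= Rabs (y - z).
Proof. rewrite /clip /Rmax /Rmin; repeat case: Rle_dec; move=> *; split_Rabs; lra. Qed.
Lemma clip_id lo hi y : lo <= y <= hi -> clip lo hi y = y.
Proof. rewrite /clip /Rmax /Rmin; repeat case: Rle_dec; lra. Qed.
Lemma clip_hi lo hi y : lo < hi -> clip lo hi y = hi -> hi <= y.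
Proof. rewrite /clip /Rmax /Rmin; repeat case: Rle_dec; lra. Qed.
Lemma clip_lo lo hi y : lo < hi -> clip lo hi y = lo -> y <= lo.
Proof. rewrite /clip /Rmax /Rmin; repeat case: Rle_dec; lra. Qed.
Lemma clip_int lo hi y : lo < clip lo hi y < hi -> clip lo hi y = y.
Proof. rewrite /clip /Rmax /Rmin; repeat case: Rle_dec; lra. Qed.

Lemma lim_le (u : nat -> R) l k c B : Un_cv u l -> (forall m, (k <= m)%coq_nat -> Rabs (u m - c) <= B) ->
  Rabs (l - c) <= B.
Proof.
move=> Hu H.
case: (Rle_dec (Rabs (l - c)) B) => // Hn. exfalso.
case: (Hu (Rabs (l - c) - B) ltac:(lra)) => N HN.
have := HN (N + k)%coq_nat ltac:(lia). rewrite /Rdist => h1.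
have := H (N + k)%coq_nat ltac:(lia).
have := Rabs_triang (u (N + k)%coq_nat - c) (l - u (N + k)%coq_nat).
have -> : u (N + k)%coq_nat - c + (l - u (N + k)%coq_nat) = l - c by ring.
rewrite Rabs_minus_sym in h1. lra.
Qed.

Lemma lim_in (u : nat -> R) l a b : Un_cv u l -> (forall m, a <= u m <= b) -> a <= l <= b.
Proof.
move=> Hu H. split.
- case: (Rle_dec a l) => // Hn. exfalso.
  case: (Hu (a - l) ltac:(lra)) => N HN. have := HN N (le_n _). rewrite /Rdist.
  have := H N. move=> *; split_Rabs; lra.
- case: (Rle_dec l b) => // Hn. exfalso.
  case: (Hu (l - b) ltac:(lra)) => N HN. have := HN N (le_n _). rewrite /Rdist.
  have := H N. move=> *; split_Rabs; lra.
Qed.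


Lemma banach {n} (lo hi : 'I_n -> R) (T : vec n -> vec n) (v : 'I_n -> R) q :
  (forall i, 0 < v i) -> 0 <= q < 1 ->
  (forall x : vec n, (forall i, lo i <= x i <= hi i) -> forall i, lo i <= T x i <= hi i) ->
  (forall x y ρ, (forall i, lo i <= x i <= hi i) -> (forall i, lo i <= y i <= hi i) -> 0 <= ρ ->
     (forall j, Rabs (x j - y j) <= ρ * v j) -> forall i, Rabs (T x i - T y i) <= q * ρ * v i) ->
  forall x0 : vec n, (forall i, lo i <= x0 i <= hi i) ->
  exists x, (forall i, lo i <= x i <= hi i) /\ T x = x.
Proof.
move=> Hv Hq HT Hc x0 Hx0.
pose xs := fun k => Nat.iter k T x0.
have Pxs : forall k i, lo i <= xs k i <= hi i.
  elim => [|k IH] i //=. by apply HT.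
have Hq1 : 0 < 1 - q by lra.
case: (FM2 (fun j => Rabs (xs 1%nat j - xs 0%nat j) / v j)) => R [HR HRj].
have step : forall k j, Rabs (xs (S k) j - xs k j) <= R * q ^ k * v j.
  elim => [|k IH] j.
  - have := HRj j. have Hvj := Hv j. rewrite /= Rmult_1_r => h.
    have E : Rabs (T x0 j - x0 j) = Rabs (T x0 j - x0 j) / v j * v j by field; lra.
    rewrite E. apply Rmult_le_compat_r; lra.
  - have := Hc (xs (S k)) (xs k) (R * q ^ k) (Pxs _) (Pxs _) ltac:(apply Rmult_le_pos; [lra|apply pow_le; lra]) IH j.
    rewrite /= -/(xs k) -/(xs (S k)) => h. 
    have -> : R * (q * q ^ k) * v j = q * (R * q ^ k) * v j by ring. exact h.
have tail : forall k m j, Rabs (xs (k + m)%coq_nat j - xs k j) <= R * v j * (q ^ k - q ^ (k + m)%coq_nat) / (1 - q).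
  move=> k; elim => [|m IH] j.
  - rewrite Nat.add_0_r Rminus_diag Rabs_R0 Rminus_diag. have -> : R * v j * 0 / (1 - q) = 0 by field; lra. lra.
  - rewrite Nat.add_succ_r.
    have := Rabs_triang (xs (S (k + m)%coq_nat) j - xs (k + m)%coq_nat j) (xs (k + m)%coq_nat j - xs k j).
    have -> : xs (S (k + m)%coq_nat) j - xs (k + m)%coq_nat j + (xs (k + m)%coq_nat j - xs k j) = xs (S (k + m)%coq_nat) j - xs k j by ring.
    have := step (k + m)%coq_nat j. have := IH j.
    have -> : R * v j * (q ^ k - q ^ S (k + m)%coq_nat) / (1 - q) = R * q ^ (k + m)%coq_nat * v j + R * v j * (q ^ k - q ^ (k + m)%coq_nat) / (1 - q).
      rewrite /=; field; lra.
    lra.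
have tail2 : forall k m j, Rabs (xs (k + m)%coq_nat j - xs k j) <= R * v j * q ^ k / (1 - q).
  move=> k m j. have := tail k m j.
  have : 0 <= R * v j * q ^ (k + m)%coq_nat / (1 - q).
    apply Rmult_le_pos; [|apply Rlt_le, Rinv_0_lt_compat; lra].
    apply Rmult_le_pos; [apply Rmult_le_pos; [lra|have := Hv j; lra]|apply pow_le; lra].
  have -> : R * v j * (q ^ k - q ^ (k + m)%coq_nat) / (1 - q) = R * v j * q ^ k / (1 - q) - R * v j * q ^ (k + m)%coq_nat / (1 - q) by field; lra.
  lra.
have cauchy : forall j, Cauchy_crit (fun k => xs k j).
  move=> j eps Heps.
  have Hvj := Hv j.
  have Hy : 0 < eps * (1 - q) / (2 * R * v j + 1).
    apply Rdiv_lt_0_compat; [nra|nra].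
  have Ha : Rabs q < 1 by rewrite Rabs_pos_eq; lra.
  case: (pow_lt_1_zero q Ha _ Hy) => N HN.
  exists N => a b Ha' Hb'. rewrite /Rdist.
  have Ea : a = (N + Nat.sub a N)%coq_nat by lia.
  have Eb : b = (N + Nat.sub b N)%coq_nat by lia.
  have h1 := tail2 N (Nat.sub a N) j. rewrite -Ea in h1.
  have h2 := tail2 N (Nat.sub b N) j. rewrite -Eb in h2.
  have h3 := HN N (le_n _). rewrite Rabs_pos_eq in h3; last by apply pow_le; lra.
  have := Rabs_triang (xs a j - xs N j) (xs N j - xs b j).
  have -> : xs a j - xs N j + (xs N j - xs b j) = xs a j - xs b j by ring.
  rewrite (Rabs_minus_sym (xs N j)).
  have h4 : R * v j * q ^ N / (1 - q) <= R * v j * (eps * (1 - q) / (2 * R * v j + 1)) / (1 - q).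
    apply Rmult_le_compat_r; [apply Rlt_le, Rinv_0_lt_compat; lra|].
    apply Rmult_le_compat_l; [nra|lra].
  have E4 : R * v j * (eps * (1 - q) / (2 * R * v j + 1)) / (1 - q) = eps * (R * v j / (2 * R * v j + 1)) by field; nra.
  rewrite E4 in h4.
  have : R * v j / (2 * R * v j + 1) < 1/2.
    apply (Rmult_lt_reg_r (2 * R * v j + 1)); [nra|].
    have -> : R * v j / (2 * R * v j + 1) * (2 * R * v j + 1) = R * v j by field; nra.
    nra.
  have : 0 <= R * v j / (2 * R * v j + 1) by apply Rmult_le_pos; [nra|apply Rlt_le, Rinv_0_lt_compat; nra].
  nra.
pose xst := fun j => proj1_sig (R_complete _ (cauchy j)).
have Hlim : forall j, Un_cv (fun k => xs k j) (xst j) := fun j => proj2_sig (R_complete _ (cauchy j)).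
have Hb : forall k j, Rabs (xst j - xs k j) <= R * v j * q ^ k / (1 - q).
  move=> k j. apply: (@lim_le _ _ k _ _ (Hlim j)) => m Hm.
  have Em : m = (k + Nat.sub m k)%coq_nat by lia. rewrite Em. apply tail2.
have Pst : forall i, lo i <= xst i <= hi i.
  move=> i. apply: (@lim_in _ _ _ _ (Hlim i)) => m. apply Pxs.
exists xst; split => //.
apply functional_extensionality => j.
have Hvj := Hv j.
have Z : Rabs (T xst j - xst j) = 0.
  apply (@lim0 q (2 * R * v j / (1 - q)) _ Hq (Rabs_pos _)) => k.
  have h1 := Hc xst (xs k) (R * q ^ k / (1 - q)) Pst (Pxs k)
     ltac:(apply Rmult_le_pos; [apply Rmult_le_pos; [lra|apply pow_le; lra]|apply Rlt_le, Rinv_0_lt_compat; lra]).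
  have Hbk : forall j', Rabs (xst j' - xs k j') <= R * q ^ k / (1 - q) * v j'.
    move=> j'. have := Hb k j'. have -> : R * v j' * q ^ k / (1 - q) = R * q ^ k / (1 - q) * v j' by field; lra. done.
  have h1' := h1 Hbk j. change (T (xs k) j) with (xs (S k) j) in h1'.
  have h2 := Hb (S k) j.
  have := Rabs_triang (T xst j - T (xs k) j) (T (xs k) j - xst j).
  have -> : T xst j - T (xs k) j + (T (xs k) j - xst j) = T xst j - xst j by ring.
  have -> : T (xs k) j = xs (S k) j by [].
  rewrite (Rabs_minus_sym (xs (S k) j)).
  have Hqk : 0 <= q ^ k by apply pow_le; lra.
  have E1 : q * (R * q ^ k / (1 - q)) * v j = q * (R * v j * q ^ k / (1 - q)) by field; lra.
  have E2 : R * v j * q ^ S k / (1 - q) = q * (R * v j * q ^ k / (1 - q)) by rewrite /=; field; lra.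
  have E3 : 2 * R * v j / (1 - q) * q ^ k = 2 * (R * v j * q ^ k / (1 - q)) by field; lra.
  have P0 : 0 <= R * v j * q ^ k / (1 - q).
    apply Rmult_le_pos; [apply Rmult_le_pos; [nra|done]|apply Rlt_le, Rinv_0_lt_compat; lra].
  rewrite E1 in h1'. rewrite E2 in h2. rewrite E3. nra.
have := Rabs_pos (T xst j - xst j). case: (Req_dec (T xst j - xst j) 0) => h; [lra|].
have := Rabs_pos_lt _ h. lra.
Qed.

Lemma Hmat {n} (mg : 'I_n -> R) (Mg : 'I_n -> 'I_n -> R) (D W : 'I_n -> R) :
  (forall i, 0 < mg i) -> (forall i j, 0 <= Mg i j) -> (forall i, 0 <= D i < W i) ->
  (forall i, mg i * D i = rsum (ltl i) (fun j => Mg i j * D j) + rsum (gtl i) (fun j => Mg i j * W j)) ->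
  exists v gm, 0 < gm /\ (forall i, 0 < v i) /\ forall i,
    gm * v i <= mg i * v i - rsum (ltl i) (fun j => Mg i j * v j) - rsum (gtl i) (fun j => Mg i j * v j).
Proof.
move=> Hmg HMg HD Heq.
pose c := fun i => rsum (ltl i) (fun j => Mg i j * (W j - D j)).
pose d := fun i => mg i * (W i - D i).
have Hc : forall i, 0 <= c i.
  move=> i; apply rsum_nonneg => j _. have := HMg i j; have := HD j; nra.
have Hd : forall i, 0 < d i. move=> i; have := Hmg i; have := HD i; rewrite /d; nra.
case: (@FM _ c d Hc Hd) => δ [Hδ Hδi].
pose eps := fun i : 'I_n => δ ^ (Nat.sub n i).
have He0 : forall i, 0 < eps i by move=> i; apply pow_lt; lra.
have He1 : forall i, eps i <= 1.
  move=> i; rewrite /eps. have := @pow_decr δ O (Nat.sub n i) Hδ ltac:(lia). by rewrite pow_O.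
have Hel : forall i j, j \in ltl i -> eps j <= δ * eps i.
  move=> i j /mem_ltl /ltP Hj. have Hi := ltn_ord i. move/ltP: Hi => Hi.
  rewrite /eps. have := @pow_decr δ (S (Nat.sub n i)) (Nat.sub n j) Hδ ltac:(lia). by [].
pose v := fun i => D i + eps i * (W i - D i).
have Hv : forall i, 0 < v i. move=> i; have := HD i; have := He0 i; rewrite /v; nra.
pose kap := fun i => eps i * (d i - δ * c i).
have Hkap : forall i, 0 < kap i. move=> i; have := Hδi i; have := He0 i; rewrite /kap; nra.
have Hv' : forall i, 0 <= v i by move=> i; have := Hv i; lra.
case: (@FM _ v kap Hv' Hkap) => gm [Hgm Hgmi].
exists v, gm; split; [lra|split; [done|move=> i]].
have L1 : rsum (ltl i) (fun j => Mg i j * v j) <= rsum (ltl i) (fun j => Mg i j * D j) + eps i * (δ * c i).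
  rewrite /c -rsum_scal -rsum_scal -rsum_plus. apply rsum_le => j Hj.
  have h0 : 0 <= Mg i j * (W j - D j) by have := HMg i j; have := HD j; nra.
  have h := Rmult_le_compat_r _ _ _ h0 (Hel i j Hj). rewrite /v. nra.
have L2 : rsum (gtl i) (fun j => Mg i j * v j) <= rsum (gtl i) (fun j => Mg i j * W j).
  apply rsum_le => j _. rewrite /v. apply Rmult_le_compat_l; first by apply HMg.
  have := He1 j. have := HD j. nra.
have E1 : mg i * v i = mg i * D i + eps i * (mg i * (W i - D i)) by rewrite /v; ring.
have E2 : kap i = eps i * (mg i * (W i - D i)) - eps i * (δ * c i) by rewrite /kap /d; ring.
have := Hgmi i. have := Heq i. lra.
Qed.

Definition AX {n} (X : 'I_n -> 'I_n -> interval) := fun i j => ival (X i j).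
Definition BY {n} (y : 'I_n -> interval) := fun i => sopp (ival (y i)).
Definition UX {n} (bx : 'I_n -> interval) (xt : vec n) := fun i => sshift (ival (bx i)) (xt i).

Definition mg {n} (X : 'I_n -> 'I_n -> interval) i :=
  if Rlt_dec 0 (fst (X i i)) then fst (X i i) else - snd (X i i).
Definition als {n} (X : 'I_n -> 'I_n -> interval) i :=
  if Rlt_dec 0 (fst (X i i)) then fst (X i i) else snd (X i i).
Definition Mg {n} (X : 'I_n -> 'I_n -> interval) i j :=
  Rmax (Rabs (fst (X i j))) (Rabs (snd (X i j))).
Definition am {n} (X : 'I_n -> 'I_n -> interval) i j :=
  if Rle_dec (Rabs (fst (X i j))) (Rabs (snd (X i j))) then snd (X i j) else fst (X i j).

Lemma am_in {n} X (i j : 'I_n) : iwf (X i j) -> ival (X i j) (am X i j).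
Proof. rewrite /am /ival /iwf => H; case: Rle_dec => h /=; lra. Qed.
Lemma am_abs {n} X (i j : 'I_n) : Rabs (am X i j) = Mg X i j.
Proof. rewrite /am /Mg /Rmax; case: Rle_dec => h1 //=. Qed.
Lemma Mg_bound {n} X (i j : 'I_n) al : ival (X i j) al -> Rabs al <= Mg X i j.
Proof. rewrite /Mg /ival /Rmax => H; case: Rle_dec => h; split_Rabs; lra. Qed.
Lemma Mg_pos {n} X (i j : 'I_n) : 0 <= Mg X i j.
Proof. rewrite /Mg. have := Rabs_pos (fst (X i j)). have := Rmax_l (Rabs (fst (X i j))) (Rabs (snd (X i j))). lra. Qed.


Lemma sign_facts {n} X (i : 'I_n) : iwf (X i i) -> (0 < fst (X i i) \/ snd (X i i) < 0) ->
  [/\ ival (X i i) (als X i), Rabs (als X i) = mg X i, 0 < mg X i,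
      (forall al, ival (X i i) al -> mg X i <= Rabs al) &
      (forall al, ival (X i i) al -> 0 < al * als X i)].
Proof.
rewrite /als /mg /ival /iwf => wf; case: Rlt_dec => h /= [h'|h'].
- split; [lra|rewrite Rabs_pos_eq; lra|lra| |]; move=> al Ha; [rewrite Rabs_pos_eq; lra|nra].
- lra.
- lra.
- split; [lra|rewrite Rabs_left; lra|lra| |]; move=> al Ha; [rewrite Rabs_left; lra|nra].
Qed.

Definition Gs {n} X y bx bz (xt : vec n) := Gamma (AX X) (BY y) (UX bx xt) (UX bz xt).
Definition Beta {n} X y bx bz (xt : vec n) (i : 'I_n) :=
  ssub (ssub (BY y i) (ssum (ltl i) (fun j => smul (AX X i j) (Gs X y bx bz xt j))))
       (ssum (gtl i) (fun j => smul (AX X i j) (UX bx xt j))).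

Lemma GsE {n} X y bx bz (xt : vec n) i :
  Gs X y bx bz xt i = gam (AX X i i) (Beta X y bx bz xt i) (UX bz xt i).
Proof. by rewrite /Gs GammaE. Qed.

Lemma Beta_in {n} X y bx bz (xt : vec n) i b0 (a s t : 'I_n -> R) :
  BY y i b0 -> (forall j, j \in ltl i -> Gs X y bx bz xt j (s j)) ->
  (forall j, j \in gtl i -> UX bx xt j (t j)) -> (forall j, AX X i j (a j)) ->
  Beta X y bx bz xt i (b0 - rsum (ltl i) (fun j => a j * s j) - rsum (gtl i) (fun j => a j * t j)).
Proof.
move=> Hb Hs Ht Ha.
exists (b0 - rsum (ltl i) (fun j => a j * s j)), (rsum (gtl i) (fun j => a j * t j)).
split; [|split; [|done]].
- exists b0, (rsum (ltl i) (fun j => a j * s j)); split; [done|split; [|done]].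
  apply ssum_in => j Hj. exists (a j), (s j); split; [done|split; [by apply Hs|done]].
- apply ssum_in => j Hj. exists (a j), (t j); split; [done|split; [by apply Ht|done]].
Qed.

Lemma Rmax_in (P : R -> Prop) a b : P a -> P b -> P (Rmax a b).
Proof. rewrite /Rmax; by case: Rle_dec. Qed.
Lemma Rmin_in (P : R -> Prop) a b : P a -> P b -> P (Rmin a b).
Proof. rewrite /Rmin; by case: Rle_dec. Qed.
Lemma Rmaxmin a b : Rmax a b - Rmin a b = Rabs (a - b).
Proof. rewrite /Rmax /Rmin; case: Rle_dec => h /=; split_Rabs; lra. Qed.

Lemma Dex {n} X y bx bz (xt : vec n) :
  (forall i, iwf (bx i)) -> (forall i, iwf (y i)) -> (forall i j, iwf (X i j)) ->
  (forall i, 0 < fst (X i i) \/ snd (X i i) < 0) ->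
  (forall i al be t, ival (X i i) al -> Beta X y bx bz xt i be -> al * t = be ->
     fst (bx i) - xt i < t < snd (bx i) - xt i) ->
  (forall i t, fst (bx i) - xt i <= t <= snd (bx i) - xt i -> UX bz xt i t) ->
  exists D EM EP : 'I_n -> R, forall i,
    [/\ 0 <= D i < snd (bx i) - fst (bx i),
        mg X i * D i = rsum (ltl i) (fun j => Mg X i j * D j)
                     + rsum (gtl i) (fun j => Mg X i j * (snd (bx j) - fst (bx j))),
        Gs X y bx bz xt i (EM i), Gs X y bx bz xt i (EP i) & EP i - EM i = D i].
Proof.
move=> wfx wfy wfX Hsg K2 Wsub.
pose L := fun j : 'I_n => fst (bx j) - xt j.
pose H := fun j : 'I_n => snd (bx j) - xt j.
pose W := fun j : 'I_n => snd (bx j) - fst (bx j).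
suff: forall k, exists D EM EP : 'I_n -> R, forall i : 'I_n, (nat_of_ord i < k)%coq_nat ->
    [/\ 0 <= D i < W i,
        mg X i * D i = rsum (ltl i) (fun j => Mg X i j * D j)
                     + rsum (gtl i) (fun j => Mg X i j * W j),
        Gs X y bx bz xt i (EM i), Gs X y bx bz xt i (EP i) & EP i - EM i = D i].
  case/(_ n) => D [EM [EP HP]]; exists D, EM, EP => i; apply HP.
  have := ltn_ord i; move/ltP; lia.
elim => [|k [D [EM [EP HP]]]].
  by exists (fun _ => 0), (fun _ => 0), (fun _ => 0) => i; lia.
case: (Nat.lt_ge_cases k n) => Hk; last first.
  exists D, EM, EP => i Hi. apply HP. have := ltn_ord i; move/ltP; lia.
pose i0 : 'I_n := @Ordinal n k (introT ltP Hk).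
have lt_k : forall j, j \in ltl i0 -> (nat_of_ord j < k)%coq_nat.
  move=> j /mem_ltl /ltP. by [].
pose s := fun j => if Rle_dec 0 (am X i0 j) then EM j else EP j.
pose s' := fun j => if Rle_dec 0 (am X i0 j) then EP j else EM j.
pose t := fun j => if Rle_dec 0 (am X i0 j) then L j else H j.
pose t' := fun j => if Rle_dec 0 (am X i0 j) then H j else L j.
pose b0 := - fst (y i0).
have Hb0 : BY y i0 b0 by exists (fst (y i0)); split; [rewrite /ival; have := wfy i0; rewrite /iwf; lra|done].
pose bp := b0 - rsum (ltl i0) (fun j => am X i0 j * s j) - rsum (gtl i0) (fun j => am X i0 j * t j).
pose bm := b0 - rsum (ltl i0) (fun j => am X i0 j * s' j) - rsum (gtl i0) (fun j => am X i0 j * t' j).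
pose Rr := rsum (ltl i0) (fun j => Mg X i0 j * D j) + rsum (gtl i0) (fun j => Mg X i0 j * W j).
have Hamin : forall j, AX X i0 j (am X i0 j) by move=> j; apply am_in.
have HLx : forall j, UX bx xt j (L j).
  move=> j; exists (fst (bx j)); split; [rewrite /ival; have := wfx j; rewrite /iwf; lra|done].
have HHx : forall j, UX bx xt j (H j).
  move=> j; exists (snd (bx j)); split; [rewrite /ival; have := wfx j; rewrite /iwf; lra|done].
have Bp : Beta X y bx bz xt i0 bp.
  apply Beta_in => // j Hj.
  - have [_ _ h1 h2 _] := HP j (lt_k j Hj). rewrite /s; by case: Rle_dec.
  - rewrite /t; by case: Rle_dec.
have Bm : Beta X y bx bz xt i0 bm.
  apply Beta_in => // j Hj.
  - have [_ _ h1 h2 _] := HP j (lt_k j Hj). rewrite /s'; by case: Rle_dec.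
  - rewrite /t'; by case: Rle_dec.
have Ediff : bp - bm = Rr.
  rewrite /bp /bm /Rr.
  have E1 : rsum (ltl i0) (fun j => am X i0 j * s' j) - rsum (ltl i0) (fun j => am X i0 j * s j)
           = rsum (ltl i0) (fun j => Mg X i0 j * D j).
    rewrite -rsum_minus; apply rsum_ext => j Hj.
    have [_ _ _ _ hD] := HP j (lt_k j Hj). rewrite -am_abs /s /s'.
    case: Rle_dec => h /=; [rewrite Rabs_pos_eq // -hD; ring | rewrite Rabs_left; [rewrite -hD; ring|lra]].
  have E2 : rsum (gtl i0) (fun j => am X i0 j * t' j) - rsum (gtl i0) (fun j => am X i0 j * t j)
           = rsum (gtl i0) (fun j => Mg X i0 j * W j).
    rewrite -rsum_minus; apply rsum_ext => j Hj.
    rewrite -am_abs /t /t' /W /L /H.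
    case: Rle_dec => h /=; [rewrite Rabs_pos_eq //; ring | rewrite Rabs_left; [ring|lra]].
  lra.
have [Hals1 Hals2 Hals3 Hals4 Hals5] := @sign_facts _ X i0 (wfX i0 i0) (Hsg i0).
have Hne : als X i0 <> 0 by move=> h; rewrite h Rabs_R0 in Hals2; lra.
pose ep := bp / als X i0.
pose em := bm / als X i0.
have Eep : als X i0 * ep = bp by rewrite /ep; field.
have Eem : als X i0 * em = bm by rewrite /em; field.
have Iep := K2 i0 _ _ _ Hals1 Bp Eep.
have Iem := K2 i0 _ _ _ Hals1 Bm Eem.
have Gep : Gs X y bx bz xt i0 ep.
  rewrite GsE; apply (gam_in (als X i0) bp) => //. apply Wsub; lra.
have Gem : Gs X y bx bz xt i0 em.
  rewrite GsE; apply (gam_in (als X i0) bm) => //. apply Wsub; lra.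
have HRr : 0 <= Rr.
  rewrite /Rr. have h1 : 0 <= rsum (ltl i0) (fun j => Mg X i0 j * D j).
    apply rsum_nonneg => j Hj. have [[hD _] _ _ _ _] := HP j (lt_k j Hj). have := Mg_pos X i0 j. nra.
  have h2 : 0 <= rsum (gtl i0) (fun j => Mg X i0 j * W j).
    apply rsum_nonneg => j Hj. have := wfx j. rewrite /iwf /W. have := Mg_pos X i0 j. nra.
  lra.
pose Dn := Rmax ep em - Rmin ep em.
have EDn : mg X i0 * Dn = Rr.
  rewrite /Dn Rmaxmin -Hals2 -Rabs_mult.
  have -> : als X i0 * (ep - em) = Rr by rewrite -Ediff -Eep -Eem; ring.
  by rewrite Rabs_pos_eq.
have HDn : 0 <= Dn < W i0.
  rewrite /Dn Rmaxmin /W. split; [apply Rabs_pos|]. split_Rabs; lra.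
exists (fun j => if j == i0 then Dn else D j),
       (fun j => if j == i0 then Rmin ep em else EM j),
       (fun j => if j == i0 then Rmax ep em else EP j) => i Hi.
have Hneq : forall j : 'I_n, (nat_of_ord j < k)%coq_nat -> (j == i0) = false.
  move=> j Hj. apply/eqP => E. rewrite E /= in Hj. lia.
case: (eqVneq i i0) => Ei.
- subst i. split; [done| |by apply Rmin_in|by apply Rmax_in|done].
  rewrite EDn /Rr. f_equal. apply rsum_ext => j Hj. by rewrite Hneq //; apply lt_k.
- have Hik : (nat_of_ord i < k)%coq_nat.
    have : nat_of_ord i <> k. move=> E. move/eqP: Ei; apply. apply: val_inj => /=. done.
    lia.
  have [h1 h2 h3 h4 h5] := HP i Hik.
  split => //.
  rewrite h2. f_equal. apply rsum_ext => j Hj. rewrite Hneq //.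
  have := mem_ltl Hj. move/ltP. lia.
Qed.

Lemma part2 {n} (g : vec n -> vec n) (Jg : vec n -> 'I_n -> 'I_n -> R) X y bx bz (xt : vec n) :
  (forall i, iwf (bx i)) -> (forall i, iwf (y i)) -> (forall i j, iwf (X i j)) ->
  (forall x z, in_box bx x -> in_box bx z -> forall i, exists ξ, in_box bx ξ /\
      g z i - g x i = rsum (enum 'I_n) (fun j => Jg ξ i j * (z j - x j))) ->
  in_box bx xt ->
  (forall i t, ival (bx i) t -> ival (bz i) t) ->
  in_box y (g xt) ->
  (forall ξ, in_box bx ξ -> forall i j, ival (X i j) (Jg ξ i j)) ->
  (forall i, exists gg, Gs X y bx bz xt i gg) ->
  (forall i gg, Gs X y bx bz xt i gg -> fst (bx i) - xt i < gg < snd (bx i) - xt i) ->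
  exists x, (forall i, Gs X y bx bz xt i (x i - xt i)) /\ g x = (fun _ => 0) /\
    forall x', in_box bx x' -> g x' = (fun _ => 0) -> x' = x.
Proof.
move=> wfx wfy wfX hmvt hxt hzx hy hJ hne hint.
have Wsub : forall i t, fst (bx i) - xt i <= t <= snd (bx i) - xt i -> UX bz xt i t.
  move=> i t h; exists (t + xt i); split; [apply hzx; rewrite /ival; lra|ring].
have hne' : forall i, exists gg, gam (AX X i i) (Beta X y bx bz xt i) (UX bz xt i) gg.
  by move=> i; rewrite -GsE.
have hint' : forall i gg, gam (AX X i i) (Beta X y bx bz xt i) (UX bz xt i) gg ->
    fst (bx i) - xt i < gg < snd (bx i) - xt i.
  by move=> i gg; rewrite -GsE; apply hint.
have Hsg : forall i, 0 < fst (X i i) \/ snd (X i i) < 0.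
  move=> i; exact: (@C1sign (X i i) (Beta X y bx bz xt i) (UX bz xt i) _ _ (wfX i i) (Wsub i) (hne' i) (hint' i)).
have convG : forall j, conv (Gs X y bx bz xt j).
  move=> j; rewrite GsE; exact: conv_hull.
have convB : forall i, conv (Beta X y bx bz xt i).
  move=> i; apply conv_ssub; [apply conv_ssub|].
  - apply conv_sopp, conv_ival.
  - apply conv_ssum => j; apply conv_smul; [apply conv_ival|apply convG].
  - apply conv_ssum => j; apply conv_smul; [apply conv_ival|apply conv_sshift, conv_ival].
have K2 : forall i al be t, ival (X i i) al -> Beta X y bx bz xt i be -> al * t = be ->
     fst (bx i) - xt i < t < snd (bx i) - xt i.
  move=> i al be t Ha Hb Ht.
  apply: (@C2q (AX X i i) (Beta X y bx bz xt i) (UX bz xt i)).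
  - apply conv_ival.
  - apply convB.
  - move=> a1 a2; rewrite /AX /ival => h1 h2. have := wfX i i. rewrite /iwf. case: (Hsg i) => h; nra.
  - apply Wsub.
  - apply hne'.
  - apply hint'.
  - by exists al, be.
case: (@Dex n X y bx bz xt wfx wfy wfX Hsg K2 Wsub) => D [EM [EP HD]].
have Hsf : forall i, [/\ ival (X i i) (als X i), Rabs (als X i) = mg X i, 0 < mg X i,
      (forall al, ival (X i i) al -> mg X i <= Rabs al) &
      (forall al, ival (X i i) al -> 0 < al * als X i)].
  move=> i; exact: (@sign_facts n X i (wfX i i) (Hsg i)).
case: (@Hmat n (mg X) (Mg X) D (fun i => snd (bx i) - fst (bx i))).
- by move=> i; case: (Hsf i).
- move=> i j; apply Mg_pos.
- by move=> i; case: (HD i).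
- by move=> i; case: (HD i).
move=> v [γ [Hγ [Hv Hvi]]].
case: (FM2 (fun i => Mg X i i)) => K0 [HK0 HK0i].
pose K := K0 + 1.
have HK : 0 < K by rewrite /K; lra.
pose σ := fun i : 'I_n => if Rlt_dec 0 (fst (X i i)) then 1 else -1.
pose c := fun i => σ i * K.
have Hdiag : forall i al, ival (X i i) al ->
    [/\ al / c i = Rabs al / K, Rabs al <= K, mg X i <= Rabs al, c i <> 0 &
        (0 < fst (X i i) /\ 0 < al /\ c i = K \/ snd (X i i) < 0 /\ al < 0 /\ c i = - K)].
  move=> i al Hal.
  have [_ _ _ h4 _] := Hsf i.
  have hK : Rabs al <= K by have := @Mg_bound n X i i al Hal; have := HK0i i; rewrite /K; lra.
  rewrite /c /σ. move: Hal; rewrite /ival => Hal.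
  case: Rlt_dec => h /=.
  - have h4' := h4 al Hal. rewrite Rabs_pos_eq in hK; [|lra]. rewrite Rabs_pos_eq in h4'; [|lra]. rewrite Rabs_pos_eq; [|lra].
    split; [field; lra | lra | lra | (move=> E; lra) | left; repeat split; lra].
  - have h' : snd (X i i) < 0 by case: (Hsg i) => //; lra.
    have h4' := h4 al Hal. rewrite Rabs_left in hK; [|lra]. rewrite Rabs_left in h4'; [|lra]. rewrite Rabs_left; [|lra].
    split; [field; lra | lra | lra | (move=> E; lra) | right; repeat split; lra].
pose q := Rmax 0 (1 - γ / K).
have Hq : 0 <= q < 1.
  rewrite /q /Rmax; case: Rle_dec => h; split; try lra.
  have : 0 < γ / K by apply Rdiv_lt_0_compat. lra.
pose lo := fun i => fst (bx i).
pose hi := fun i => snd (bx i).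
pose T := fun (x : vec n) i => clip (lo i) (hi i) (x i - g x i / c i).
have HT : forall x : vec n, (forall i, lo i <= x i <= hi i) -> forall i, lo i <= T x i <= hi i.
  move=> x _ i. apply clip_in. have := wfx i. by rewrite /iwf.
have Hc : forall x z ρ, (forall i, lo i <= x i <= hi i) -> (forall i, lo i <= z i <= hi i) -> 0 <= ρ ->
     (forall j, Rabs (x j - z j) <= ρ * v j) -> forall i, Rabs (T x i - T z i) <= q * ρ * v i.
  move=> x z ρ Px Pz Hρ HΔ i.
  eapply Rle_trans; first by apply clip_lip.
  have Bx : in_box bx x by move=> j; exact: Px j.
  have Bz : in_box bx z by move=> j; exact: Pz j.
  case: (hmvt z x Bz Bx i) => ξ [Hξ Eg].
  pose a := fun j => Jg ξ i j.
  have Ha : forall j, ival (X i j) (a j) := hJ ξ Hξ i.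
  have [Ed HaK Hmg Hcne Hcs] := Hdiag i (a i) (Ha i).
  have Habsc : Rabs (c i) = K by case: Hcs => [[_ [_ ->]]|[_ [_ ->]]]; [rewrite Rabs_pos_eq; lra|rewrite Rabs_Ropp Rabs_pos_eq; lra].
  rewrite (rsum_split i) in Eg.
  set SL := rsum (ltl i) _ in Eg. set SG := rsum (gtl i) _ in Eg.
  set r := Rabs (a i) / K in Ed.
  have E1 : (g x i - g z i) / c i = SL / c i + a i / c i * (x i - z i) + SG / c i by rewrite Eg /a; field.
  rewrite Ed in E1.
  have E2 : g x i / c i - g z i / c i = (g x i - g z i) / c i by field.
  have Eexp : x i - g x i / c i - (z i - g z i / c i) = (x i - z i) * (1 - r) - (SL / c i + SG / c i) by lra.
  rewrite Eexp.
  have Hr1 : r <= 1. rewrite /r. apply (Rmult_le_reg_r K) => //. have -> : Rabs (a i) / K * K = Rabs (a i) by field; lra. lra.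
  have Hr0 : mg X i / K <= r. rewrite /r. apply Rmult_le_compat_r; [apply Rlt_le, Rinv_0_lt_compat; lra|done].
  have Hmg0 : 0 < mg X i by case: (Hsf i).
  have Hmk : 0 <= mg X i / K by apply Rlt_le, Rdiv_lt_0_compat.
  pose ML := rsum (ltl i) (fun j => Mg X i j * v j).
  pose MG := rsum (gtl i) (fun j => Mg X i j * v j).
  have hSL : Rabs SL <= ρ * ML.
    eapply Rle_trans; [apply rsum_abs|]. rewrite /ML -rsum_scal. apply rsum_le => j _.
    rewrite Rabs_mult. have := @Mg_bound n X i j _ (Ha j). have := HΔ j. have := Rabs_pos (a j). have := Rabs_pos (x j - z j).
    rewrite /a. nra.
  have hSG : Rabs SG <= ρ * MG.
    eapply Rle_trans; [apply rsum_abs|]. rewrite /MG -rsum_scal. apply rsum_le => j _.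
    rewrite Rabs_mult. have := @Mg_bound n X i j _ (Ha j). have := HΔ j. have := Rabs_pos (a j). have := Rabs_pos (x j - z j).
    rewrite /a. nra.
  have Tri : Rabs ((x i - z i) * (1 - r) - (SL / c i + SG / c i)) <= Rabs (x i - z i) * (1 - r) + (Rabs SL + Rabs SG) / K.
    eapply Rle_trans; first by apply Rabs_triang.
    rewrite Rabs_Ropp Rabs_mult (Rabs_pos_eq (1 - r)); last lra.
    have := Rabs_triang (SL / c i) (SG / c i).
    rewrite !/Rdiv !Rabs_mult Rabs_inv Habsc. lra.
  have S1 : Rabs (x i - z i) * (1 - r) <= ρ * v i * (1 - mg X i / K).
    have := HΔ i. have := Rabs_pos (x i - z i). nra.
  have HKi : 0 <= / K by apply Rlt_le, Rinv_0_lt_compat.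
  have S2 : (Rabs SL + Rabs SG) / K <= ρ * (ML + MG) / K.
    apply Rmult_le_compat_r => //. lra.
  have S3 : ρ * (ML + MG) / K <= ρ * (mg X i * v i - γ * v i) / K.
    apply Rmult_le_compat_r => //. apply Rmult_le_compat_l => //. have := Hvi i. rewrite -/ML -/MG. lra.
  have S4 : ρ * v i * (1 - mg X i / K) + ρ * (mg X i * v i - γ * v i) / K = ρ * v i * (1 - γ / K) by field; lra.
  have S5 : ρ * v i * (1 - γ / K) <= q * ρ * v i.
    have hq := Rmax_r 0 (1 - γ / K). rewrite -/q in hq. have h0 : 0 <= ρ * v i by have := Hv i; nra. have := Rmult_le_compat_l _ _ _ h0 hq. lra.
  lra.
have hxt' : forall i, lo i <= xt i <= hi i by move=> i; exact: hxt i.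
case: (@banach n lo hi T v q Hv Hq HT Hc xt hxt') => xs [Pxs Fix].
have Bxs : in_box bx xs by move=> j; exact: Pxs j.
have lohi : forall i, lo i < hi i.
  move=> i; case: (hne i) => gg Hgg; have := hint i gg Hgg; rewrite /lo /hi; lra.
have Z : forall k (i : 'I_n), (nat_of_ord i < k)%coq_nat ->
    Gs X y bx bz xt i (xs i - xt i) /\ g xs i = 0.
  elim => [|k IH] i Hi; first lia.
  case: (Nat.eq_dec (nat_of_ord i) k) => Eik; last by apply IH; lia.
  case: (hmvt xt xs hxt Bxs i) => ξ [Hξ Eg].
  pose a := fun j => Jg ξ i j.
  have Ha : forall j, ival (X i j) (a j) := hJ ξ Hξ i.
  pose d := fun j => xs j - xt j.
  pose b0 := - g xt i.
  have Hb0 : BY y i b0 by exists (g xt i); split; [exact: hy i|done].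
  pose β := b0 - rsum (ltl i) (fun j => a j * d j) - rsum (gtl i) (fun j => a j * d j).
  have Bβ : Beta X y bx bz xt i β.
    apply Beta_in => // j Hj.
    - have := mem_ltl Hj. move/ltP => h. apply (IH j). lia.
    - exists (xs j); split; [exact: Bxs j|done].
  have [Ed HaK Hmg Hcne Hcs] := Hdiag i (a i) (Ha i).
  have ane : a i <> 0 by case: Hcs => [[_ [h _]]|[_ [h _]]]; lra.
  pose tt := β / a i.
  have Ett : a i * tt = β by rewrite /tt; field.
  have Htt := K2 i (a i) β tt (Ha i) Bβ Ett.
  pose r := g xs i.
  have Erow : a i * d i - r = β.
    rewrite (rsum_split i) in Eg. rewrite /β /b0 /r /d /a. move: Eg. set SL := rsum (ltl i) _. set SG := rsum (gtl i) _. move=> Eg. lra.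
  have Fi : clip (lo i) (hi i) (xs i - r / c i) = xs i by have := f_equal (fun f => f i) Fix.
  pose w := r / c i.
  have Ew : r = w * c i by rewrite /w; field.
  have Pi := Pxs i.
  have Hr : r = 0.
    case: (Rle_lt_or_eq_dec _ _ (proj2 Pi)) => h2; last first.
      exfalso. have := @clip_hi (lo i) (hi i) _ (lohi i) (etrans Fi h2). rewrite -/w h2 => h.
      have hw : w <= 0 by lra.
      have Hd : d i = snd (bx i) - xt i by rewrite /d h2.
      case: Hcs => [[_ [h3 h4]]|[_ [h3 h4]]]; rewrite h4 in Ew; nra.
    case: (Rle_lt_or_eq_dec _ _ (proj1 Pi)) => h1.
    - have := @clip_int (lo i) (hi i) (xs i - r / c i). rewrite Fi => h.
      have := h (conj h1 h2). rewrite -/w. move=> h'. have w0 : w = 0 by lra. rewrite Ew w0; ring.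
    - exfalso. have := @clip_lo (lo i) (hi i) _ (lohi i) (etrans Fi (esym h1)). rewrite -/w -h1 => h.
      have hw : 0 <= w by lra.
      have Hd : d i = fst (bx i) - xt i by rewrite /d -h1.
      case: Hcs => [[_ [h3 h4]]|[_ [h3 h4]]]; rewrite h4 in Ew; nra.
  split; last done.
  rewrite GsE. apply (gam_in (a i) β) => //.
  - apply Wsub. have := Bxs i. rewrite /ival. lra.
  - exact: Ha i.
  - rewrite Hr /d in Erow. lra.
have Zall : forall i, Gs X y bx bz xt i (xs i - xt i) /\ g xs i = 0.
  move=> i; apply (Z n). have := ltn_ord i. move/ltP. done.
exists xs; split; [by move=> i; case: (Zall i)|split].
  apply functional_extensionality => i; by case: (Zall i).
move=> x' Bx' Hg'.
have Px' : forall i, lo i <= x' i <= hi i by move=> i; exact: Bx' i.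
have Tx' : T x' = x'.
  apply functional_extensionality => i. rewrite /T Hg'.
  have -> : x' i - 0 / c i = x' i by rewrite /Rdiv Rmult_0_l Rminus_0_r.
  apply clip_id, Px'.
case: (FM2 (fun j => Rabs (x' j - xs j) / v j)) => ρ0 [Hρ0 Hρ0j].
have It : forall k j, Rabs (x' j - xs j) <= ρ0 * q ^ k * v j.
  elim => [|k IHk] j.
  - rewrite /= Rmult_1_r. have := Hρ0j j. have := Hv j. move=> hv h.
    have E : Rabs (x' j - xs j) = Rabs (x' j - xs j) / v j * v j by field; lra.
    rewrite E. apply Rmult_le_compat_r; lra.
  - have := Hc x' xs (ρ0 * q ^ k) Px' Pxs ltac:(apply Rmult_le_pos; [lra|apply pow_le; lra]) IHk j.
    rewrite Tx' Fix /=. move=> h. have -> : ρ0 * (q * q ^ k) * v j = q * (ρ0 * q ^ k) * v j by ring. done.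
apply functional_extensionality => j.
have Z0 : Rabs (x' j - xs j) = 0.
  apply (@lim0 q (ρ0 * v j) _ Hq (Rabs_pos _)) => k.
  have := It k j. have -> : ρ0 * q ^ k * v j = ρ0 * v j * q ^ k by ring. done.
case: (Req_dec (x' j - xs j) 0) => h; [lra|]. have := Rabs_pos_lt _ h. lra.
Qed.

Lemma box_seg {n} {bx : 'I_n -> interval} {x z : vec n} :
  in_box bx x -> in_box bx z -> forall t, 0 <= t <= 1 -> in_box bx (fun j => x j + t * (z j - x j)).
Proof.
move=> Hx Hz t Ht j. have := Hx j. have := Hz j. rewrite /ival. move=> [h1 h2] [h3 h4]. split; nra.
Qed.

Theorem theorem2 (p n : nat)
  (f : vec p -> vec n -> vec n)
  (J : vec p -> vec n -> 'I_n -> 'I_n -> R)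
  (bx by_ bz : 'I_n -> interval) (ba : 'I_p -> interval)
  (xt : vec n) (bX : 'I_n -> 'I_n -> interval)
  (wf_x : forall i, iwf (bx i)) (wf_y : forall i, iwf (by_ i))
  (wf_z : forall i, iwf (bz i)) (wf_a : forall k, iwf (ba k))
  (wf_X : forall i j, iwf (bX i j))
  (hdiff : forall a : vec p, exists U : vec n -> Prop,
      is_open U /\ (forall x, in_box bx x -> U x) /\
      (forall x, U x -> has_jacobian (f a) (J a x) x))
  (hxt : in_box bx xt)
  (hi : forall v, in_box bx v -> in_box bz v)
  (hii : forall a, in_box ba a -> in_box by_ (f a xt))
  (hiii : forall a x, in_box ba a -> in_box bx x ->
            forall i j, ival (bX i j) (J a x i j)) :
  (forall a x, in_box ba a -> in_box bx x -> f a x = (fun _ => 0) ->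
     HS_image bX by_ bx bz xt x)
  /\
  ((exists v, HS_image bX by_ bx bz xt v) ->
   (forall v, HS_image bX by_ bx bz xt v -> in_int_box bx v) ->
   forall a, in_box ba a ->
     exists! x, HS_image bX by_ bx bz xt x /\ f a x = (fun _ => 0)).
Proof.
have Hmvt : forall a x z, in_box bx x -> in_box bx z -> forall i, exists ξ, in_box bx ξ /\
      f a z i - f a x i = rsum (enum 'I_n) (fun j => J a ξ i j * (z j - x j)).
  move=> a x z Hx Hz i.
  case: (hdiff a) => U [_ [HU HJ]].
  have := @mvt_vec n (f a) (J a) (in_box bx) (fun w hw => HJ w (HU w hw)) x z (box_seg Hx Hz) i.
  case=> c [Hc E]. exists (fun k => x k + c * (z k - x k)); split => //.
  apply box_seg => //; lra.
split.
- move=> a x Ha Hx Hf.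
  have := functional_choice (fun i ξ => in_box bx ξ /\
      f a x i - f a xt i = rsum (enum 'I_n) (fun j => J a ξ i j * (x j - xt j))) (Hmvt a xt x hxt Hx).
  case=> ξf Hξ.
  move=> i. exists (x i - xt i); split; [|ring].
  apply: (@gs_contains n (fun i j => ival (bX i j)) (fun i => sopp (ival (by_ i)))
     (fun i => sshift (ival (bx i)) (xt i)) (fun i => sshift (ival (bz i)) (xt i))
     (fun j => x j - xt j) (fun i j => J a (ξf i) i j) (fun i => - f a xt i)).
  + move=> j; exists (x j); split; [exact: Hx j|done].
  + move=> j; exists (x j); split; [exact: (hi x Hx) j|done].
  + move=> i' j; apply hiii => //; by case: (Hξ i').
  + move=> j; exists (f a xt j); split; [exact: (hii a Ha) j|done].
  + move=> i'. case: (Hξ i') => _ E. rewrite (rsum_split i') in E.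
    have : f a x i' = 0 by rewrite Hf.
    move: E. set SL := rsum (ltl i') _. set SG := rsum (gtl i') _. move=> E h. lra.
- move=> [v0 Hv0] Hint a Ha.
  have hne : forall i, exists gg, Gs bX by_ bx bz xt i gg.
    move=> i; case: (Hv0 i) => gg [Hg _]; by exists gg.
  have hint : forall i gg, Gs bX by_ bx bz xt i gg -> fst (bx i) - xt i < gg < snd (bx i) - xt i.
    move=> i gg Hg.
    pose w := fun k : 'I_n => if k == i then xt i + gg else v0 k.
    have Hw : HS_image bX by_ bx bz xt w.
      move=> k. rewrite /w. case: (eqVneq k i) => E.
      + subst k. by exists gg.
      + exact: Hv0 k.
    have := Hint w Hw i. rewrite /w eqxx. lra.
  have hzx : forall i t, ival (bx i) t -> ival (bz i) t.
    move=> i t Ht.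
    pose w := fun k : 'I_n => if k == i then t else xt k.
    have Hw : in_box bx w.
      move=> k. rewrite /w. case: (eqVneq k i) => E; [by subst k|exact: hxt k].
    have := hi w Hw i. by rewrite /w eqxx.
  have := @part2 n (f a) (J a) bX by_ bx bz xt wf_x wf_y wf_X (Hmvt a) hxt hzx (hii a Ha) (fun ξ hξ => hiii a ξ Ha hξ) hne hint.
  case=> x [HG [Hg0 Hu]].
  exists x; split.
  + split => //. move=> i; exists (x i - xt i); split; [apply HG|ring].
  + move=> x' [HS' Hf']. symmetry; apply Hu => // i. have := Hint x' HS' i. rewrite /ival. lra.
Qed.
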